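(* Let $n\ge1$ and let $\mathcal P_n$ be the set of peakless weak Dyck paths with exactly $n$ steps of type $U$ or $H$. Executing a path $P\in\mathcal P_n$ with a stack (reading $U$ as push, $D$ as pop, $H$ as direct transfer) is always possible and yields a permutation $S(P)$; the map $S$ is a bijection from $\mathcal P_n$ onto the set of $312$-avoiding permutations of $\{1,\ldots,n\}$. Executing $P$ with a queue (reading $U$ as enqueue, $D$ as dequeue, $H$ as direct transfer) yields a permutation $Q(P)$; the map $Q$ is a bijection from $\mathcal P_n$ onto the set of $321$-avoiding permutations of $\{1,\ldots,n\}$. Consequently $|\mathcal P_n|=C_n=\frac{1}{2n+1}\binom{2n+1}{n+1}$, the number of $321$-avoiding permutations of $\{1,\ldots,n\}$ equals $C_n$, and $Q\circ S^{-1}$ is a bijection from $312$-avoiding permutations onto $321$-avoiding permutations of $\{1,\ldots,n\}$.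
   Context: A weak Dyck path is a finite word in the steps $U=(1,1)$, $D=(1,-1)$, $H=(1,0)$ whose lattice path starts at height $0$, ends at height $0$ and never goes below height $0$. It is peakless if no $U$ is immediately followed by $D$. Executing a path: input is $1,2,\ldots,n$ in order, storage (stack or queue) and output initially empty; the steps are performed in order, where push/enqueue moves the next input element into the storage (top of stack / back of queue), pop/dequeue moves the top of the stack / front of the queue to the end of the output, and direct transfer moves the next input element to the end of the output. A permutation avoids $312$ (resp. $321$) if there are no $i<j<k$ with $p_j<p_k<p_i$ (resp. $p_i>p_j>p_k$). *)

(* Defs.v *)
From HB Require Import structures.
From mathcomp Require Import all_boot.
Set Implicit Arguments. Unset Strict Implicit. Unset Printing Implicit Defensive.

(** Steps of a weak Dyck path: U = (1,1), D = (1,-1), H = (1,0). *)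
Inductive step := U | D | H.

Definition step_eqb (a b : step) : bool :=
  match a, b with U, U | D, D | H, H => true | _, _ => false end.
Lemma step_eqP : Equality.axiom step_eqb.
Proof. by case; case; constructor. Qed.
HB.instance Definition _ := hasDecEq.Build step step_eqP.

Definition weak_dyck (P : seq step) : Prop :=
  (forall k, count (pred1 D) (take k P) <= count (pred1 U) (take k P)) /\
  count (pred1 U) P = count (pred1 D) P.

Definition peakless (P : seq step) : Prop :=
  forall i, ~ (nth H P i = U /\ nth H P i.+1 = D).

Definition inPn (n : nat) (P : seq step) : Prop :=
  weak_dyck P /\ peakless P /\ count (fun s => (s == U) || (s == H)) P = n.

(** Execution with a stack (top = head of list). *)
Fixpoint exec_stack (P : seq step) (inp st out : seq nat) : option (seq nat) :=
  match P with
  | [::] => Some out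
  | U :: P' => match inp with x :: inp' => exec_stack P' inp' (x :: st) out | [::] => None end
  | D :: P' => match st with x :: st' => exec_stack P' inp st' (rcons out x) | [::] => None end
  | H :: P' => match inp with x :: inp' => exec_stack P' inp' st (rcons out x) | [::] => None end
  end.

(** Execution with a queue (front = head of list, enqueue at the back). *)
Fixpoint exec_queue (P : seq step) (inp q out : seq nat) : option (seq nat) :=
  match P with
  | [::] => Some out
  | U :: P' => match inp with x :: inp' => exec_queue P' inp' (rcons q x) out | [::] => None end
  | D :: P' => match q with x :: q' => exec_queue P' inp q' (rcons out x) | [::] => None end
  | H :: P' => match inp with x :: inp' => exec_queue P' inp' q (rcons out x) | [::] => None end
  end.

Definition run_stack (n : nat) (P : seq step) := exec_stack P (iota 1 n) [::] [::].
Definition run_queue (n : nat) (P : seq step) := exec_queue P (iota 1 n) [::] [::].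

(** S(P) and Q(P): the output (meaningful when the run succeeds). *)
Definition Smap (n : nat) (P : seq step) : seq nat := odflt [::] (run_stack n P).
Definition Qmap (n : nat) (P : seq step) : seq nat := odflt [::] (run_queue n P).

Definition is_perm (n : nat) (s : seq nat) : Prop := perm_eq s (iota 1 n).

(** Pattern avoidance (positions are 0-based indices into the word). *)
Definition avoids312 (s : seq nat) : Prop :=
  ~ exists i j k, [/\ i < j, j < k, k < size s &
        nth 0 s j < nth 0 s k < nth 0 s i].
Definition avoids321 (s : seq nat) : Prop :=
  ~ exists i j k, [/\ i < j, j < k, k < size s &
        nth 0 s k < nth 0 s j < nth 0 s i].

Definition catalan (n : nat) : nat := 'C(n.*2.+1, n.+1) %/ n.*2.+1.

(* Main.v *)
Require Import Defs.
From HB Require Import structures.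
From mathcomp Require Import all_boot.
From mathcomp Require Import zify.
Set Implicit Arguments. Unset Strict Implicit. Unset Printing Implicit Defensive.

Fixpoint wd (h : nat) (P : seq step) : bool :=
  match P with
  | [::] => h == 0
  | U :: P' => wd h.+1 P'
  | D :: P' => (0 < h) && wd h.-1 P'
  | H :: P' => wd h P'
  end.

Fixpoint pk (P : seq step) : bool :=
  match P with
  | [::] => true
  | x :: P' => ~~ ((x == U) && (nth H P' 0 == D)) && pk P'
  end.

Ltac clia := simpl in *; lia.

Notation cU := (count (pred1 U)).
Notation cD := (count (pred1 D)).

Notation cUH := (count (fun s => (s == U) || (s == H))).

Lemma wdE h P : wd h P <->
  (forall k, cD (take k P) <= h + cU (take k P)) /\ h + cU P = cD P.
Proof.
elim: P h => [|x P IH] h /=.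
  split; first by move/eqP=> ->; split=> // k; rewrite take_nil.
  by case=> _; move/eqP; rewrite addn0.
case: x => /=.
- rewrite IH; split.
    case=> H1 H2; split; last by clia.
    by case=> [|k] //=; have := H1 k; clia.
  case=> H1 H2; split; last by clia.
  by move=> k; have := H1 k.+1; rewrite /=; clia.
- split.
    case/andP=> h0; rewrite IH; case=> H1 H2; split; last by clia.
    by case=> [|k] //=; have := H1 k; clia.
  case=> H1 H2; have h0 : 0 < h by have := H1 1; rewrite /= take0 /=; clia.
  rewrite h0 /= IH; split; last by clia.
  by move=> k; have := H1 k.+1; rewrite /=; clia.
- rewrite IH; split.
    case=> H1 H2; split; last by clia.
    by case=> [|k] //=; have := H1 k; clia.
  case=> H1 H2; split; last by clia.
  by move=> k; have := H1 k.+1; rewrite /=; clia.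
Qed.

Lemma weak_dyckE P : weak_dyck P <-> wd 0 P.
Proof. by rewrite wdE /weak_dyck. Qed.

Lemma wd_count h P : wd h P -> h + cU P = cD P.
Proof. by case/wdE. Qed.

Lemma peaklessE P : peakless P <-> pk P.
Proof.
elim: P => [|x P IH] /=.
  by split=> // _ i; rewrite nth_nil; case.
split.
  move=> HP; apply/andP; split.
    by apply/negP=> /andP[/eqP a /eqP b]; apply: (HP 0).
  by apply/IH=> i; apply: (HP i.+1).
case/andP=> Hx /IH HP [|i] /=.
  by case=> a b; move: Hx; rewrite a b.
exact: HP.
Qed.

Lemma wd_nseqU k h P : wd h (nseq k U ++ P) = wd (h + k) P.
Proof. by elim: k h => [|k IH] h /=; rewrite ?addn0 // IH addnS. Qed.

Lemma pk_nseqU k P : pk (nseq k U ++ H :: P) = pk P.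
Proof. by elim: k => [|k IH] //=; case: k IH. Qed.

Fixpoint gg (c : nat) (s : seq nat) : seq step :=
  match s with
  | [::] => [::]
  | x :: s' => if x < c then D :: gg c s' else nseq (x - c) U ++ H :: gg x.+1 s'
  end.

Definition push (b : bool) (y : nat) (st : seq nat) := if b then rcons st y else y :: st.

Fixpoint gexec b (P : seq step) (inp st out : seq nat) : option (seq nat) :=
  match P with
  | [::] => Some out
  | U :: P' => match inp with x :: inp' => gexec b P' inp' (push b x st) out | [::] => None end
  | D :: P' => match st with x :: st' => gexec b P' inp st' (rcons out x) | [::] => None end
  | H :: P' => match inp with x :: inp' => gexec b P' inp' st (rcons out x) | [::] => None end
  end.

Lemma exec_stackE P inp st out : exec_stack P inp st out = gexec false P inp st out.
Proof. by elim: P inp st out => [|[] P IH] [|x i] [|y st] out //=. Qed.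

Lemma exec_queueE P inp st out : exec_queue P inp st out = gexec true P inp st out.
Proof. by elim: P inp st out => [|[] P IH] [|x i] [|y st] out //=. Qed.

Lemma gexec_out b P inp st out :
  gexec b P inp st out = omap (cat out) (gexec b P inp st [::]).
Proof.
elim: P inp st out => [|x P IH] inp st out /=; first by rewrite cats0.
case: x; case: inp => [|y i]; case: st => [|z st] //=;
  rewrite IH [in RHS]IH; case: (gexec _ _ _ _ _) => //= t;
  by rewrite ?cat_rcons.
Qed.

Definition pushall b st c k := if b then st ++ iota c k else rev (iota c k) ++ st.

Lemma gexec_Us b k c m P st out :
  gexec b (nseq k U ++ P) (iota c (k + m)) st out =
  gexec b P (iota (c + k) m) (pushall b st c k) out.
Proof.
elim: k c st => [|k IH] c st /=.
  by rewrite addn0 /pushall; case: b; rewrite ?cats0.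
rewrite IH addSnnS /pushall /push; clear IH; case: b => //=.
  by rewrite cat_rcons.
by rewrite rev_cons cat_rcons.
Qed.

Lemma pushall_perm b st c k : perm_eq (pushall b st c k) (st ++ iota c k).
Proof.
rewrite /pushall; case: b => //.
by rewrite perm_catC perm_cat2l perm_rev.
Qed.

Lemma decomp P h : wd h P -> pk P ->
  P = [::] \/ (exists P', P = D :: P') \/ exists k P', P = nseq k U ++ H :: P'.
Proof.
elim: P h => [|x P IH] h; first by left.
case: x => /=.
- move=> Hw /andP[Hn Hp]; right; right.
  case: (IH _ Hw Hp) => [E|[[P' E]|[k [P' E]]]].
  + by move: Hw; rewrite E.
  + by move: Hn; rewrite E.
  + by exists k.+1, P'; rewrite E.
- by move=> _ _; right; left; exists P.
- by move=> _ _; right; right; exists 0, P.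
Qed.

Lemma run_path b P c m st out :
  wd (size st) P -> pk P -> cUH P = m -> all (fun y => y < c) st ->
  exists t, [/\ gexec b P (iota c m) st out = Some (out ++ t), gg c t = P
             & perm_eq t (st ++ iota c m)].
Proof.
elim: {P}(size P).+1 {-2}P (ltnSn (size P)) c m st out => // N IHN P HN c m st out Hw Hp Hc Hst.
case: (decomp Hw Hp) => [E|[[P' E]|[k [P' E]]]]; subst P.
- move: Hw Hc => /= /eqP/size0nil -> <-.
  by exists [::]; rewrite cats0.
- case: st Hw Hst => [|y st] //= Hw /andP[Hy Hst].
  have [|t [E1 E2 E3]] := IHN P' _ c m st (rcons out y) Hw Hp Hc Hst.
    by move: HN; rewrite /=; lia.
  exists (y :: t); split => //=.
  - by rewrite E1 cat_rcons.
  - by rewrite Hy E2.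
  - by rewrite perm_cons.
- move: Hw Hp Hc; rewrite wd_nseqU pk_nseqU count_cat count_nseq /= => Hw Hp Hc.
  have Hm : m = k + (cUH P').+1 by rewrite -Hc mul1n addnS.
  have Hs : size (pushall b st c k) = size st + k.
    by rewrite /pushall; case: (b); rewrite size_cat ?size_rev size_iota // addnC.
  have Hst2 : all (fun y => y < (c + k).+1) (pushall b st c k).
    apply/allP=> z; rewrite (perm_mem (pushall_perm _ _ _ _)) mem_cat mem_iota.
    case/orP=> [/(allP Hst) /=|]; lia.
  have Hw2 : wd (size (pushall b st c k)) P' by rewrite Hs.
  have HN2 : size P' < N by move: HN; rewrite size_cat size_nseq /=; lia.
  have [t [E1 E2 E3]] := IHN P' HN2 (c + k).+1 (cUH P') _ (rcons out (c + k)) Hw2 Hp erefl Hst2.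
  exists ((c + k) :: t); split.
  - by rewrite Hm gexec_Us /= E1 cat_rcons.
  - by rewrite /= ltnNge leq_addr /= addKn E2.
  - apply/permP => p; move: (permP E3 p) (permP (pushall_perm b st c k) p).
    rewrite Hm iotaD /= !count_cat /= -addnS; lia.
Qed.

Lemma gg_path s X c m : uniq s -> perm_eq s (X ++ iota c m) -> all (fun y => y < c) X ->
  [/\ wd (size X) (gg c s), pk (gg c s) & cUH (gg c s) = m].
Proof.
elim: s X c m => [|x s IH] X c m Hu Hperm HX.
  move/perm_size: Hperm; rewrite size_cat size_iota /= => Hs.
  by split => //=; [apply/eqP|]; lia.
move: Hu => /= /andP[Hx Hu].
have xin : x \in X ++ iota c m by rewrite -(perm_mem Hperm) mem_head.
case: ifP => xc.
- have xX : x \in X by move: xin; rewrite mem_cat mem_iota (leqNgt c x) xc /= orbF.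
  have Hp2 : perm_eq s (rem x X ++ iota c m).
    by rewrite -(perm_cons x) (perm_trans Hperm) // -cat_cons perm_cat2r perm_to_rem.
  have HX2 : all (fun y => y < c) (rem x X).
    by apply/allP=> z /mem_rem /(allP HX).
  have [H1 H2 H3] := IH _ _ _ Hu Hp2 HX2.
  move: H1; rewrite size_rem //= => H1.
  split => //=; rewrite H1 andbT -has_predT; by apply/hasP; exists x.
- have xlt : x < c + m.
    by move: xin; rewrite mem_cat mem_iota => /orP[/(allP HX)|/andP[] //]; rewrite /= xc.
  have xge : c <= x by rewrite leqNgt xc.
  set k := x - c.
  have Hm : m = k + (m - k - 1).+1 by rewrite /k; lia.
  have Hck : c + k = x by rewrite /k; lia.
  have Hp2 : perm_eq s ((X ++ iota c k) ++ iota x.+1 (m - k - 1)).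
    rewrite -(perm_cons x); apply/permP => p; move: (permP Hperm p).
    rewrite {1}Hm iotaD Hck /= !count_cat /=; lia.
  have HX2 : all (fun y => y < x.+1) (X ++ iota c k).
    apply/allP=> z; rewrite mem_cat mem_iota; case/orP=> [/(allP HX) /=|]; lia.
  have [H1 H2 H3] := IH _ _ _ Hu Hp2 HX2.
  move: H1; rewrite size_cat size_iota => H1.
  split.
  + by rewrite wd_nseqU /=.
  + by rewrite pk_nseqU.
  + rewrite count_cat count_nseq /= H3 mul1n; lia.
Qed.

Definition ordb (b : bool) : rel nat := if b then (fun x y => x < y) else (fun x y => y < x).
Definition rb (b : bool) : rel nat := if b then (fun x y => y < x) else (fun x y => x < y).
Definition nopair (r : rel nat) (p : pred nat) (s : seq nat) :=
  pairwise (fun x y => ~~ r x y) (filter p s).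
Fixpoint apat (r : rel nat) (s : seq nat) : bool :=
  match s with [::] => true | x :: s' => nopair r (fun z => z < x) s' && apat r s' end.

Lemma ordb_trans b : transitive (ordb b).
Proof. by case: b => y x z /=; lia. Qed.
Arguments ordb_trans : clear implicits.

Lemma ordb_r b x y : ordb b x y -> ~~ rb b x y.
Proof. by case: b => /=; lia. Qed.

Lemma pairwise_ord_uniq b L : pairwise (ordb b) L -> uniq L.
Proof.
move=> pL; apply: (@pairwise_uniq _ (ordb b) _ _ pL) => x.
by case: b {pL} => /=; rewrite ltnn.
Qed.

Lemma pairwise_rb_ord b F : uniq F -> pairwise (fun x y => ~~ rb b x y) F -> pairwise (ordb b) F.
Proof.
elim: F => [|x F IH] //= /andP[xF uF] /andP[H1 H2].
rewrite IH // andbT; apply/allP => y yF; have := allP H1 y yF.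
have : x != y by apply: contraNneq xF => ->.
by case: b {IH H1 H2} => /=; lia.
Qed.

Lemma filter_eqL b L s : uniq s -> pairwise (ordb b) L -> {subset L <= s} ->
  (filter (mem L) s == L) = pairwise (fun x y => ~~ rb b x y) (filter (mem L) s).
Proof.
move=> us pL sLs; apply/idP/idP.
  move/eqP => ->; apply: sub_pairwise pL; exact: ordb_r.
move=> pF; apply/eqP; apply: (@sorted_eq nat (ordb b) (ordb_trans b)).
- by case: b {pF pL sLs} => x y /=; lia.
- rewrite (sorted_pairwise (ordb_trans b)). have H0 := (pairwise_rb_ord (filter_uniq (mem L) us) pF). exact H0.
- by rewrite (sorted_pairwise (ordb_trans b)).
- apply: uniq_perm; [exact: filter_uniq|exact: pairwise_ord_uniq pL|].
  move=> z; rewrite mem_filter; apply/andP/idP => [[]//|zL]; split => //; exact: sLs.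
Qed.

Lemma pushall_pairwise b st c k : pairwise (ordb b) st -> all (fun y => y < c) st ->
  pairwise (ordb b) (pushall b st c k).
Proof.
move=> pst ast; rewrite /pushall; case: b pst => pst; rewrite pairwise_cat pst /= ?andbT.
- rewrite -(sorted_pairwise (ordb_trans true)) iota_ltn_sorted andbT.
  apply/allrelP => x y /(allP ast) /= xc; rewrite mem_iota; lia.
- rewrite -(sorted_pairwise (ordb_trans false)) rev_sorted iota_ltn_sorted andbT.
  apply/allrelP => x y; rewrite mem_rev mem_iota => xc /(allP ast) /=; lia.
Qed.

Lemma filter_mem_self (s : seq nat) : filter (mem s) s = s.
Proof. by apply/all_filterP; apply/allP. Qed.

Lemma filter_pushall b st c k : all (fun y => y < c) st ->
  filter (mem st) (pushall b st c k) = st.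
Proof.
move=> ast.
have E : filter (mem st) (iota c k) = [::].
  rewrite -(filter_pred0 (iota c k)); apply: eq_in_filter => z; rewrite mem_iota /=.
  move=> /andP[cz _]; apply/negP => /(allP ast) /=; lia.
rewrite /pushall; case: b; rewrite filter_cat ?filter_rev E ?filter_mem_self //.
by rewrite cats0.
Qed.

Lemma charz b s st c m out : uniq s -> perm_eq s (st ++ iota c m) ->
  all (fun y => y < c) st -> pairwise (ordb b) st ->
  (gexec b (gg c s) (iota c m) st out == Some (out ++ s)) =
  apat (rb b) s && (filter (mem st) s == st).
Proof.
elim: s st c m out => [|x s IH] st c m out Hu Hperm Hst pst.
  move/perm_size: Hperm; rewrite size_cat size_iota /= => Hs.
  have -> : st = [::] by apply/size0nil; lia.
  by rewrite /= cats0 eqxx.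
move: Hu => /= /andP[Hx Hu].
have xin : x \in st ++ iota c m by rewrite -(perm_mem Hperm) mem_head.
case: ifP => xc.
- have xst : x \in st by move: xin; rewrite mem_cat mem_iota (leqNgt c x) xc /= orbF.
  case: st Hperm Hst pst xst xin => [|y st] // Hperm Hst pst xst _.
  rewrite /= [gexec _ _ _ _ _]gexec_out.
  have [Exy|Nxy] := eqVneq y x.
  + subst y; rewrite -gexec_out -cat_rcons.
    move: Hst pst => /= /andP[_ Hst] /andP[_ pst].
    have Hp' : perm_eq s (st ++ iota c m) by rewrite -(perm_cons x).
    rewrite IH //.
    rewrite mem_head eqseq_cons eqxx /=.
    have -> : filter (mem (x :: st)) s = filter (mem st) s.
      apply: eq_in_filter => z zs; change ((z \in x :: st) = (z \in st)); rewrite in_cons.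
      by have -> : (z == x) = false by apply: contraNF Hx => /eqP <-.
    case E: (filter (mem st) s == st); rewrite ?andbF ?andbT //.
    rewrite /nopair.
    have -> : filter (fun z => z < x) s = filter (fun z => z < x) (filter (mem st) s).
      rewrite -filter_predI; apply: eq_in_filter => z zs /=.
      case zx: (z < x) => //=; symmetry.
      have : z \in st ++ iota c m by rewrite -(perm_mem Hp').
      by rewrite mem_cat mem_iota; case/orP => //; lia.
    have H0 : pairwise (fun x y => ~~ rb b x y) (filter (mem st) s).
      by rewrite (eqP E); apply: sub_pairwise pst; exact: ordb_r.
    have H1 := pairwise_filter (fun z => z < x) H0; by rewrite H1.
  + rewrite andbC; have -> /= : (x \in y :: st) by [].
    have Nyx : (x == y) = false by rewrite eq_sym (negbTE Nxy).
    rewrite eqseq_cons Nyx /=.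
    case: (gexec _ _ _ _ _) => //= t.
    apply/negP => /eqP [] /eqP; rewrite cat_rcons eqseq_cat // eqxx /= eqseq_cons.
    by rewrite (negbTE Nxy).
- have xlt : x < c + m.
    by move: xin; rewrite mem_cat mem_iota => /orP[/(allP Hst)|/andP[] //]; rewrite /= xc.
  have xge : c <= x by rewrite leqNgt xc.
  set k := x - c.
  have Hm : m = k + (m - k - 1).+1 by rewrite /k; lia.
  have Hck : c + k = x by rewrite /k; lia.
  set st2 := pushall b st c k.
  have Hp2 : perm_eq s (st2 ++ iota x.+1 (m - k - 1)).
    rewrite -(perm_cons x); apply/permP => p.
    move: (permP Hperm p) (permP (pushall_perm b st c k) p).
    rewrite /st2 {1}Hm iotaD Hck /= !count_cat /=; lia.
  have Hst2 : all (fun y => y < x.+1) st2.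
    apply/allP=> z; rewrite (perm_mem (pushall_perm _ _ _ _)) mem_cat mem_iota.
    case/orP=> [/(allP Hst) /=|]; lia.
  have pst2 : pairwise (ordb b) st2 by apply: pushall_pairwise.
  rewrite /= {1}Hm gexec_Us Hck /= -cat_rcons IH //.
  have xnst : (x \in st) = false by apply/negP => /(allP Hst) /=; lia.
  rewrite xnst.
  have Ef : filter (fun z => z < x) s = filter (mem st2) s.
    apply: eq_in_filter => z zs.
    have : z \in st2 ++ iota x.+1 (m - k - 1) by rewrite -(perm_mem Hp2).
    have zx : z != x by apply: contraNneq Hx => <-.
    change (z \in st2 ++ iota x.+1 (m - k - 1) -> (z < x) = (z \in st2)).
    rewrite mem_cat mem_iota; case/orP => [zst2|/andP[xz _]].
      by rewrite zst2; have := allP Hst2 z zst2; move: zx => /=; lia.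
    case E2: (z \in st2); last by lia.
    by have := allP Hst2 z E2; move=> /=; lia.
  have sub2 : {subset st2 <= s}.
    move=> z zst2; rewrite (perm_mem Hp2) mem_cat zst2 //.
  rewrite /nopair Ef -(filter_eqL Hu pst2 sub2).
  case E: (filter (mem st2) s == st2); rewrite /= ?andbF //.
  rewrite andbT; suff -> : (filter (mem st) s == st) by rewrite andbT.
  apply/eqP; rewrite -{2}(filter_pushall b k Hst) -/st2 -(eqP E) -filter_predI.
  apply: eq_in_filter => z zs /=.
  case zst: (z \in st) => //=; symmetry.
  by rewrite (perm_mem (pushall_perm _ _ _ _)) mem_cat zst.
Qed.

Lemma ex2_cons (Q : nat -> nat -> bool) (y : nat) s :
  (exists j k, [/\ j < k, k < size (y :: s) & Q (nth 0 (y :: s) j) (nth 0 (y :: s) k)]) <->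
  has (Q y) s \/ (exists j k, [/\ j < k, k < size s & Q (nth 0 s j) (nth 0 s k)]).
Proof.
split.
  case=> [[|j] [[|k] [jk ks HQ]]] //.
    by left; apply/(has_nthP 0); exists k.
  by right; exists j, k.
case=> [/(has_nthP 0) [k ks HQ]|[j [k [jk ks HQ]]]].
  by exists 0, k.+1.
by exists j.+1, k.+1.
Qed.

Lemma ex3_cons (Q : nat -> nat -> nat -> bool) (y : nat) s :
  (exists i j k, [/\ i < j, j < k, k < size (y :: s) &
     Q (nth 0 (y :: s) i) (nth 0 (y :: s) j) (nth 0 (y :: s) k)]) <->
  (exists j k, [/\ j < k, k < size s & Q y (nth 0 s j) (nth 0 s k)]) \/
  (exists i j k, [/\ i < j, j < k, k < size s & Q (nth 0 s i) (nth 0 s j) (nth 0 s k)]).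
Proof.
split.
  case=> [[|i] [[|j] [[|k] [ij jk ks HQ]]]] //.
    by left; exists j, k.
  by right; exists i, j, k.
case=> [[j [k [jk ks HQ]]]|[i [j [k [ij jk ks HQ]]]]].
  by exists 0, j.+1, k.+1.
by exists i.+1, j.+1, k.+1.
Qed.

Lemma all_filter_has (T : Type) (p q : pred T) (s : seq T) :
  all (fun z => ~~ q z) (filter p s) = ~~ has (fun z => p z && q z) s.
Proof. elim: s => //= z s IH; case: (p z) => /=; rewrite IH //; by case: (q z). Qed.

Lemma nopair_cons r p y s :
  nopair r p (y :: s) = ~~ has (fun z => p y && p z && r y z) s && nopair r p s.
Proof.
rewrite /nopair /=; case: (p y) => /=.
  congr (_ && _); exact: (all_filter_has p (r y) s).
suff -> : has (fun z => false && p z && r y z) s = false by [].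
by elim: s.
Qed.

Lemma nopairE r p s : nopair r p s <->
  ~ exists j k, [/\ j < k, k < size s & p (nth 0 s j) && p (nth 0 s k) && r (nth 0 s j) (nth 0 s k)].
Proof.
elim: s => [|y s IH].
  by split => // _ [j [k [_ ks _]]].
have E := ex2_cons (fun a b => p a && p b && r a b) y s.
rewrite nopair_cons; split.
  case/andP=> /negP H1 /IH H2 H.
  by case: (E.1 H) => A; [exact: H1 A|exact: H2 A].
move=> H; apply/andP; split.
  by apply/negP => A; apply: H; apply: E.2; left; exact A.
by apply/IH => A; apply: H; apply: E.2; right; exact A.
Qed.

Definition Av (r : rel nat) (s : seq nat) : Prop :=
  ~ exists i j k, [/\ i < j, j < k, k < size s &
    (nth 0 s j < nth 0 s i) && (nth 0 s k < nth 0 s i) && r (nth 0 s j) (nth 0 s k)].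

Lemma AvE r s : Av r s <-> apat r s.
Proof.
rewrite /Av; elim: s => [|y s IH].
  by split => // _ [i [j [k [_ _ ks _]]]].
have E := ex3_cons (fun a b c => (b < a) && (c < a) && r b c) y s.
rewrite /=; split.
  move=> H; apply/andP; split.
    by apply/nopairE => A; apply: H; apply: E.2; left; exact A.
  by apply/IH => A; apply: H; apply: E.2; right; exact A.
case/andP=> /nopairE H1 /IH H2 H.
by case: (E.1 H) => A; [exact: H1 A|exact: H2 A].
Qed.

Lemma avoids312E s : avoids312 s <-> apat (rb false) s.
Proof.
rewrite -AvE /avoids312 /Av; split => H [i [j [k [ij jk ks HQ]]]]; apply: H; exists i, j, k;
  split => //; move: HQ => /=; lia.
Qed.

Lemma avoids321E s : avoids321 s <-> apat (rb true) s.
Proof.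
rewrite -AvE /avoids321 /Av; split => H [i [j [k [ij jk ks HQ]]]]; apply: H; exists i, j, k;
  split => //; move: HQ => /=; lia.
Qed.

Lemma inPnE n P : inPn n P <-> [/\ wd 0 P, pk P & cUH P = n].
Proof.
rewrite /inPn weak_dyckE peaklessE; split; by case=> ? [] ? ? // || case.
Qed.

Lemma path_run b n P : inPn n P ->
  exists t, [/\ gexec b P (iota 1 n) [::] [::] = Some t, gg 1 t = P & perm_eq t (iota 1 n)].
Proof.
case/inPnE => Hw Hp Hc.
by have [t [E1 E2 E3]] := @run_path b P 1 n [::] [::] Hw Hp Hc isT; exists t.
Qed.

Lemma gg_in n s : is_perm n s -> inPn n (gg 1 s).
Proof.
move=> Hs; apply/inPnE.
have := @gg_path s [::] 1 n; rewrite /=.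
by case => //; rewrite (perm_uniq Hs) iota_uniq.
Qed.

Lemma gg_run b n s : is_perm n s ->
  (gexec b (gg 1 s) (iota 1 n) [::] [::] == Some s) = apat (rb b) s.
Proof.
move=> Hs; have Hu : uniq s by rewrite (perm_uniq Hs) iota_uniq.
rewrite (@charz b s [::] 1 n [::] Hu Hs isT isT).
have -> : filter (mem ([::] : seq nat)) s = [::] by elim: s {Hs Hu}.
by rewrite andbT.
Qed.

Fixpoint compress (w : seq step) : seq step :=
  match w with
  | U :: (D :: w') => H :: compress w'
  | x :: w' => x :: compress w'
  | [::] => [::]
  end.

Fixpoint expand (P : seq step) : seq step :=
  match P with
  | [::] => [::]
  | H :: P' => U :: D :: expand P'
  | x :: P' => x :: expand P'
  end.

Lemma compress_cons x w : compress (x :: w) =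
  if (x == U) && (nth H w 0 == D) then H :: compress (behead w) else x :: compress w.
Proof. by case: x; case: w => [|[] w]. Qed.

Lemma head_expand P : (nth H (expand P) 0 == D) = (nth H P 0 == D).
Proof. by case: P => [|[] P]. Qed.

Lemma compress_expand P : pk P -> compress (expand P) = P.
Proof.
elim: P => [|x P IH] // Hp.
move: Hp => /= /andP[Hn Hp].
case: x Hn => Hn.
- rewrite [expand _]/= compress_cons head_expand; move: Hn => /= /negbTE ->.
  by rewrite /= IH.
- by rewrite [expand _]/= compress_cons /= IH.
- by rewrite [expand _]/= compress_cons /= IH.
Qed.

Lemma compress_props w : H \notin w ->
  [/\ expand (compress w) = w, pk (compress w) &
      (nth H (compress w) 0 == D) = (nth H w 0 == D)].
Proof.
elim: {w}(size w).+1 {-2}w (ltnSn (size w)) => // N IHN [|x w] // Hs.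
have {}Hs : size w < N by exact: Hs.
rewrite in_cons negb_or => /andP[Hx Hw].
rewrite compress_cons; case: x Hx => //= _.
- case: w Hs Hw => [|y w] Hs; first by move=> _.
  rewrite in_cons negb_or => /andP[Hy Hw].
  case: y Hy Hs => //= _ Hs.
  + have Hn : H \notin U :: w by rewrite in_cons negb_or /= Hw.
    have [E1 E2 E3] := IHN (U :: w) Hs Hn.
    by rewrite E1 E2 E3.
  + have Hs2 : size w < N by move: Hs => /=; lia.
    have [E1 E2 E3] := IHN w Hs2 Hw.
    by rewrite E1 E2.
- have [E1 E2 E3] := IHN w Hs Hw.
  by rewrite E1 E2.
Qed.

Lemma expand_noH P : H \notin expand P.
Proof. by elim: P => [|[] P IH] //=; rewrite !in_cons /= IH. Qed.

Lemma wd_expand h P : wd h (expand P) = wd h P.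
Proof. by elim: P h => [|[] P IH] h //=; rewrite IH. Qed.

Lemma cU_expand P : cU (expand P) = cUH P.
Proof. by elim: P => [|[] P IH] //=; rewrite IH. Qed.

Lemma size_expand P : size (expand P) = cU P + cD P + 2 * count (pred1 H) P.
Proof. elim: P => [|[] P IH] //=; rewrite IH; clia. Qed.

Lemma cUH_split P : cUH P = cU P + count (pred1 H) P.
Proof. elim: P => [|[] P IH] //=; rewrite IH; clia. Qed.

Fixpoint dy (k h a : nat) : seq (seq step) :=
  match k with
  | 0 => if (h == 0) && (a == 0) then [:: [::]] else [::]
  | k'.+1 => (if a is a'.+1 then map (cons U) (dy k' h.+1 a') else [::]) ++
             (if h is h'.+1 then map (cons D) (dy k' h' a) else [::])
  end.

Lemma mem_dy k h a w : (w \in dy k h a) = [&& size w == k, H \notin w, wd h w & cU w == a].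
Proof.
elim: k h a w => [|k IH] h a w /=.
  case: w => [|x w] /=; first by case: h; case: a.
  by case: (_ && _); rewrite ?inE.
case: w => [|x w].
  rewrite mem_cat; apply/negbTE; rewrite negb_or; apply/andP; split;
    [case: a => [|a] //|case: h => [|h] //]; by apply/mapP => [[v _]].
rewrite mem_cat.
have mU : forall (L : seq (seq step)), (x :: w \in map (cons U) L) = (x == U) && (w \in L).
  move=> L; apply/mapP/andP => [[v vL [-> ->]]|[/eqP -> wL]] //; by exists w.
have mD : forall (L : seq (seq step)), (x :: w \in map (cons D) L) = (x == D) && (w \in L).
  move=> L; apply/mapP/andP => [[v vL [-> ->]]|[/eqP -> wL]] //; by exists w.
case: a => [|a]; case: h => [|h]; rewrite ?mU ?mD ?in_nil ?orbF ?IH;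
  case: x {mU mD} => /=; rewrite ?in_cons /= ?andbF ?orbF ?add0n ?add1n ?eqSS //= ?andbF.
Qed.

Lemma uniq_dy k h a : uniq (dy k h a).
Proof.
elim: k h a => [|k IH] h a /=; first by case: (_ && _).
rewrite cat_uniq; apply/and3P; split.
- by case: a => // a; rewrite map_inj_uniq //; move=> ? ? [].
- case: a => [|a]; first by apply/hasPn => z _.
  case: h => [|h] //.
  by apply/hasPn => v /mapP [v1 _ ->]; apply/mapP => [[v2 _ []]].
- by case: h => // h; rewrite map_inj_uniq //; move=> ? ? [].
Qed.

Lemma size_dy k : forall h a, k = a.*2 + h -> k.+1 * size (dy k h a) = h.+1 * 'C(k.+1, a).
Proof.
elim: k => [|k IH] h a Hk /=.
  have -> : h = 0 by lia.
  have -> : a = 0 by lia.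
  by [].
rewrite size_cat.
case: a Hk => [|a]; case: h => [|h] Hk //=.
- rewrite ?size_map ?add0n bin0.
  have E := IH h 0 ltac:(lia); rewrite bin0 in E.
  have Ekh : k = h by lia.
  have S1 : size (dy k h 0) = 1.
    by apply/eqP; rewrite -(eqn_pmul2l (ltn0Sn k)) E Ekh muln1.
  by rewrite S1; lia.
- rewrite ?size_map ?addn0.
  have E := IH 1 a ltac:(lia).
  have B := mul_bin_diag k.+2 a.
  apply/eqP; rewrite -(eqn_pmul2l (ltn0Sn k)) mul1n; apply/eqP.
  simpl in B; nia.
- rewrite !size_map.
  have E1 := IH h.+2 a ltac:(lia).
  have E2 := IH h a.+1 ltac:(lia).
  have B1 := binS k.+1 a.
  have B2 := mul_bin_left k.+1 a.
  have Hka : k.+1 - a = a + h + 3 by lia.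
  rewrite Hka in B2.
  apply/eqP; rewrite -(eqn_pmul2l (ltn0Sn k)) B1; apply/eqP.
  nia.
Qed.

Lemma count_Pn n : exists L : seq (seq step),
  [/\ uniq L, (forall P, P \in L <-> inPn n P) & size L = catalan n].
Proof.
exists (map compress (dy n.*2 0 n)); split.
- rewrite map_inj_in_uniq; first exact: uniq_dy.
  move=> w1 w2 W1 W2 E; rewrite mem_dy in W1; rewrite mem_dy in W2.
  case/and4P: W1 => _ H1 _ _; case/and4P: W2 => _ H2 _ _.
  have [E1 _ _] := compress_props H1; have [E2 _ _] := compress_props H2.
  by rewrite -E1 E E2.
- move=> P; split.
    case/mapP => w W ->; rewrite mem_dy in W; case/and4P: W => _ Hw Hwd /eqP Hc.
    have [E1 E2 _] := compress_props Hw.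
    apply/inPnE; split => //.
      by rewrite -wd_expand E1.
    by rewrite -cU_expand E1.
  case/inPnE => Hw Hp Hc; apply/mapP; exists (expand P); last by rewrite compress_expand.
  rewrite mem_dy expand_noH wd_expand Hw cU_expand Hc eqxx /= andbT.
  apply/eqP; move: (cUH_split P) (wd_count Hw) (size_expand P) Hc; clia.
- rewrite size_map /catalan.
  have E := @size_dy n.*2 0 n (esym (addn0 _)).
  have -> : n.+1 = n.*2.+1 - n by lia.
  rewrite bin_sub; last by lia.
  by rewrite -(mul1n 'C(_, _)) -E mulKn.
Qed.

Definition Rb b n P := odflt [::] (gexec b P (iota 1 n) [::] [::]).

Lemma Rb_ok b n P : inPn n P ->
  [/\ gexec b P (iota 1 n) [::] [::] = Some (Rb b n P), gg 1 (Rb b n P) = P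
    & is_perm n (Rb b n P)].
Proof.
move=> HP; have [t [E1 E2 E3]] := path_run b HP.
by rewrite /Rb E1.
Qed.

Lemma Rb_pat b n P : inPn n P -> apat (rb b) (Rb b n P).
Proof.
move=> HP; have [E1 E2 E3] := Rb_ok b HP.
by rewrite -(gg_run b E3) E2 E1.
Qed.

Lemma Rb_inj b n P1 P2 : inPn n P1 -> inPn n P2 -> Rb b n P1 = Rb b n P2 -> P1 = P2.
Proof.
move=> H1 H2 E; have [_ E1 _] := Rb_ok b H1; have [_ E2 _] := Rb_ok b H2.
by rewrite -E1 -E2 E.
Qed.

Lemma Rb_surj b n s : is_perm n s -> apat (rb b) s -> Rb b n (gg 1 s) = s.
Proof.
move=> Hs Ha; move: Ha; rewrite -(gg_run b Hs) => /eqP E.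
by rewrite /Rb E.
Qed.

Lemma SmapE n P : Smap n P = Rb false n P.
Proof. by rewrite /Smap /run_stack exec_stackE. Qed.

Lemma QmapE n P : Qmap n P = Rb true n P.
Proof. by rewrite /Qmap /run_queue exec_queueE. Qed.

Unset Implicit Arguments.

Theorem mainTheorem5 (n : nat) (hn : 0 < n) :
  (* stack: always executable, yields a permutation, bijection onto Av(312) *)
  [/\ (forall P, inPn n P -> run_stack n P <> None /\ is_perm n (Smap n P)),
      (forall P, inPn n P -> avoids312 (Smap n P)),
      (forall P1 P2, inPn n P1 -> inPn n P2 -> Smap n P1 = Smap n P2 -> P1 = P2) &
      (forall s, is_perm n s -> avoids312 s -> exists P, inPn n P /\ Smap n P = s)] /\
  (* queue: always executable, yields a permutation, bijection onto Av(321) *)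
  [/\ (forall P, inPn n P -> run_queue n P <> None /\ is_perm n (Qmap n P)),
      (forall P, inPn n P -> avoids321 (Qmap n P)),
      (forall P1 P2, inPn n P1 -> inPn n P2 -> Qmap n P1 = Qmap n P2 -> P1 = P2) &
      (forall s, is_perm n s -> avoids321 s -> exists P, inPn n P /\ Qmap n P = s)] /\
  (* |P_n| = C_n *)
  (exists L : seq (seq step),
      [/\ uniq L, (forall P, P \in L <-> inPn n P) & size L = catalan n]) /\
  (* number of 321-avoiding permutations of {1..n} is C_n *)
  (exists L : seq (seq nat),
      [/\ uniq L, (forall s, s \in L <-> is_perm n s /\ avoids321 s)
        & size L = catalan n]) /\
  (* Q o S^{-1} is a bijection Av_n(312) -> Av_n(321) *)
  (exists f : seq nat -> seq nat,
      [/\ (forall P, inPn n P -> f (Smap n P) = Qmap n P),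
          (forall s, is_perm n s -> avoids312 s -> is_perm n (f s) /\ avoids321 (f s)),
          (forall s1 s2, is_perm n s1 -> avoids312 s1 -> is_perm n s2 -> avoids312 s2 ->
                f s1 = f s2 -> s1 = s2) &
          (forall t, is_perm n t -> avoids321 t ->
                exists s, [/\ is_perm n s, avoids312 s & f s = t])]).
Proof.
split.
  split.
  - move=> P HP; have [E1 _ E3] := Rb_ok false HP.
    by rewrite SmapE /run_stack exec_stackE E1.
  - by move=> P HP; rewrite SmapE avoids312E; apply: Rb_pat.
  - by move=> P1 P2 H1 H2; rewrite !SmapE; apply: Rb_inj.
  - move=> s Hs /avoids312E Ha; exists (gg 1 s); split; first exact: gg_in.
    by rewrite SmapE Rb_surj.
split.
  split.
  - move=> P HP; have [E1 _ E3] := Rb_ok true HP.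
    by rewrite QmapE /run_queue exec_queueE E1.
  - by move=> P HP; rewrite QmapE avoids321E; apply: Rb_pat.
  - by move=> P1 P2 H1 H2; rewrite !QmapE; apply: Rb_inj.
  - move=> s Hs /avoids321E Ha; exists (gg 1 s); split; first exact: gg_in.
    by rewrite QmapE Rb_surj.
have [L [uL mL sL]] := count_Pn n.
split; first by exists L.
split.
  exists (map (Qmap n) L); split.
  - rewrite map_inj_in_uniq // => P1 P2 /mL H1 /mL H2; rewrite !QmapE; exact: Rb_inj.
  - move=> s; split.
      case/mapP => P /mL HP ->; rewrite QmapE avoids321E; split; last exact: Rb_pat.
      by have [_ _ ?] := Rb_ok true HP.
    case=> Hs /avoids321E Ha; apply/mapP; exists (gg 1 s); first by apply/mL; apply: gg_in.
    by rewrite QmapE Rb_surj.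
  - by rewrite size_map.
exists (fun s => Qmap n (gg 1 s)); split.
- move=> P HP; rewrite SmapE; have [_ E2 _] := Rb_ok false HP; by rewrite E2.
- move=> s Hs _; have HP := gg_in Hs; rewrite QmapE avoids321E; split; last exact: Rb_pat.
  by have [_ _ ?] := Rb_ok true HP.
- move=> s1 s2 H1 /avoids312E A1 H2 /avoids312E A2; rewrite !QmapE => E.
  have := Rb_inj (gg_in H1) (gg_in H2) E => E2.
  by rewrite -(Rb_surj H1 A1) -(Rb_surj H2 A2) E2.
- move=> t Ht /avoids321E At; set P := gg 1 t; have HP : inPn n P by exact: gg_in.
  have [_ E2 E3] := Rb_ok false HP.
  exists (Rb false n P); split => //.
    by rewrite avoids312E; apply: Rb_pat.
  by rewrite E2 QmapE Rb_surj.
Qed.
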